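(* Let $\epsilon_1,\epsilon_2>0$ and let $F$ be an SCF on $n$ voters and three alternatives such that: (i) $M^{a,b}(F)\le\epsilon_1$ for every pair of distinct alternatives $a,b$; (ii) $F$ is at least $\epsilon_2$-far from every dictatorship and from every anti-dictatorship; (iii) $\Pr_{x\in(L_3)^n}[F(x)=a]\ge\epsilon_2$ for every alternative $a$. Then there exists a GSWF $G$ on $n$ voters and three alternatives such that: (1) $G$ satisfies IIA; (2) $\mathrm{Dist}(G,TR_3)\ge \epsilon_2-3\sqrt{\epsilon_1}$; (3) $NT(G)\le 3\sqrt{\epsilon_1}$.
   Context: $L_m$ is the set of linear orders on $m$ alternatives; profiles $x\in(L_m)^n$ are uniform random. For alternatives $a\ne b$, $x^{a,b}\in\{0,1\}^n$ has $x^{a,b}_i=1$ iff voter $i$ ranks $a$ above $b$. An SCF is $F:(L_m)^n\to\{$alternatives$\}$. $M^{a,b}(F)=\Pr[F(x)=a,\ F(x')=b]$ with $x,x'$ uniform profiles subject to $x^{a,b}=x'^{a,b}$. The $i$-th dictatorship (anti-dictatorship) SCF outputs the top (bottom) alternative of $x_i$; $F$ is $\delta$-far from it if $\Pr_x[F(x)\ne$ that output$]\ge\delta$. A GSWF is $G:(L_m)^n\to\{0,1\}^{\binom m2}$, giving for each pair $a,b$ a bit $G^{a,b}(x)$ ($=1$ iff society prefers $a$ to $b$, with $G^{b,a}=1-G^{a,b}$). $G$ satisfies IIA if each $G^{a,b}(x)$ depends only on $x^{a,b}$. $NT(G)=\Pr_x[G(x)$ is non-transitive$]$. $TR_m$ is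 the set of GSWFs on $m$ alternatives satisfying IIA whose output is always transitive, and $\mathrm{Dist}(G,TR_m)=\min_{H\in TR_m}\Pr_x[G(x)\ne H(x)]$. *)

(* Defs.v *)
From HB Require Import structures.
From mathcomp Require Import all_boot all_order all_algebra all_fingroup.
Set Implicit Arguments. Unset Strict Implicit. Unset Printing Implicit Defensive.
Import Order.TTheory GRing.Theory Num.Theory.
Local Open Scope ring_scope.

(* Alternatives: 'I_3.  A linear order on the alternatives is a permutation
   o : {perm 'I_3} mapping each alternative to its rank (0 = top). *)
Definition lorder := {perm 'I_3}.
Definition pref (o : lorder) (a b : 'I_3) : bool := (o a < o b)%N.
Definition topalt (o : lorder) : 'I_3 := (o^-1)%g ord0.
Definition botalt (o : lorder) : 'I_3 := (o^-1)%g ord_max.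

Definition profile (n : nat) := {ffun 'I_n -> lorder}.

Definition prob (R : numFieldType) (T : finType) (P : pred T) : R :=
  #|[set x | P x]|%:R / #|T|%:R.

Definition sameab n (a b : 'I_3) (x y : profile n) : bool :=
  [forall i, pref (x i) a b == pref (y i) a b].

Definition SCF n := profile n -> 'I_3.

Definition Mab (R : numFieldType) n (F : SCF n) (a b : 'I_3) : R :=
  #|[set p : profile n * profile n |
       [&& sameab a b p.1 p.2, F p.1 == a & F p.2 == b]]|%:R /
  #|[set p : profile n * profile n | sameab a b p.1 p.2]|%:R.

Definition far_from_dict (R : numFieldType) n (F : SCF n) (i : 'I_n) (d : R) :=
  d <= prob R (fun x : profile n => F x != topalt (x i)).
Definition far_from_antidict (R : numFieldType) n (F : SCF n) (i : 'I_n) (d : R) :=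
  d <= prob R (fun x : profile n => F x != botalt (x i)).

(* GSWF output: one bit for each unordered pair {a,b}, indexed by a < b;
   the bit is 1 iff society prefers a to b. *)
Definition upair := {p : 'I_3 * 'I_3 | (p.1 < p.2)%N}.
Definition gout := {ffun upair -> bool}.
Definition GSWF n := {ffun profile n -> gout}.

(* G^{a,b} read off the output (G^{b,a} = 1 - G^{a,b}); false on the diagonal. *)
Definition gbit (w : gout) (a b : 'I_3) : bool :=
  match insub (a, b) : option upair with
  | Some p => w p
  | None => match insub (b, a) : option upair with
            | Some p => ~~ w p
            | None => false
            end
  end.

Definition IIA n (G : GSWF n) : bool :=
  [forall a : 'I_3, forall b : 'I_3, (a != b) ==>
     [forall x : profile n, forall y : profile n,
        sameab a b x y ==> (gbit (G x) a b == gbit (G y) a b)]].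

Definition transitive_out (w : gout) : bool :=
  [forall a : 'I_3, forall b : 'I_3, forall c : 'I_3,
     [&& a != b, b != c & a != c] ==>
       (gbit w a b && gbit w b c ==> gbit w a c)].

Definition NT (R : numFieldType) n (G : GSWF n) : R :=
  prob R (fun x : profile n => ~~ transitive_out (G x)).

Definition inTR n (H : GSWF n) : bool :=
  IIA H && [forall x, transitive_out (H x)].

Definition gdist (R : numFieldType) n (G H : GSWF n) : R :=
  prob R (fun x : profile n => G x != H x).

(* Dist(G, TR_3) = min over H in TR_3 (nonempty: dictatorships);
   1 is the neutral value (all distances are <= 1). *)
Definition DistTR (R : realFieldType) n (G : GSWF n) : R :=
  \big[Order.min/1]_(H : GSWF n | inTR H) gdist R G H.

(* Main.v *)
Require Import Defs.
From HB Require Import structures.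
From mathcomp Require Import all_boot all_order all_algebra all_fingroup.
From mathcomp Require Import ring lra.
Set Implicit Arguments. Unset Strict Implicit. Unset Printing Implicit Defensive.

Definition BV n := {ffun 'I_n -> bool}.
Definition bneg n (u : BV n) : BV n := [ffun i => ~~ u i].
Definition adm n (u v w : BV n) := forall i, ~~ [&& u i == v i & v i == w i].

Lemma bnegK n (u : BV n) : bneg (bneg u) = u.
Proof. by apply/ffunP => i; rewrite !ffunE negbK. Qed.

Lemma wilson_bool n (f g h : BV n -> bool) :
  (exists u, f u) -> (exists u, ~~ f u) ->
  (exists u, g u) -> (exists u, ~~ g u) ->
  (exists u, h u) -> (exists u, ~~ h u) ->
  (forall u v w, adm u v w -> ~ (f u = g v /\ g v = h w)) ->
  exists i, exists c : bool, forall u, [/\ f u = (u i == c), g u = (u i == c) & h u = (u i == c)].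
Proof.
move=> [uf1 Hf1] [uf0 Hf0] [ug1 Hg1] [ug0 Hg0] [uh1 Hh1] [uh0 Hh0] H.
have e1 : forall u, g (bneg u) = ~~ f u.
  move=> u; case fu: (f u); case gu: (g (bneg u)) => //; exfalso.
  - apply: (H u (bneg u) uh1); first by move=> i; rewrite ffunE; case: (u i); case: (uh1 i).
    by rewrite fu gu Hh1.
  - apply: (H u (bneg u) uh0); first by move=> i; rewrite ffunE; case: (u i); case: (uh0 i).
    by rewrite fu gu (negbTE Hh0).
have e2 : forall v, h (bneg v) = ~~ g v.
  move=> v; case gv: (g v); case hv: (h (bneg v)) => //; exfalso.
  - apply: (H uf1 v (bneg v)); first by move=> i; rewrite ffunE; case: (v i); case: (uf1 i).
    by rewrite gv hv Hf1.
  - apply: (H uf0 v (bneg v)); first by move=> i; rewrite ffunE; case: (v i); case: (uf0 i).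
    by rewrite gv hv (negbTE Hf0).
have e3 : forall w, f (bneg w) = ~~ h w.
  move=> w; case hw: (h w); case fw: (f (bneg w)) => //; exfalso.
  - apply: (H (bneg w) ug1 w); first by move=> i; rewrite ffunE; case: (w i); case: (ug1 i).
    by rewrite hw fw Hg1.
  - apply: (H (bneg w) ug0 w); first by move=> i; rewrite ffunE; case: (w i); case: (ug0 i).
    by rewrite hw fw (negbTE Hg0).
have hf : forall u, h u = f u.
  move=> u; have := e2 (bneg u); rewrite bnegK => ->; by rewrite e1 negbK.
have gf : forall u, g u = f u.
  move=> u; have := e1 (bneg u); rewrite bnegK => ->; by rewrite e3 hf negbK.
have sd : forall u, f (bneg u) = ~~ f u by move=> u; rewrite e3 hf.
have clos : forall u v z : BV n, f u -> f v -> (forall j, u j = v j -> z j = u j) -> f z.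
  move=> u v z fu fv Hz; apply/negPn/negP => fz.
  apply: (H u v (bneg z)).
    move=> i; rewrite ffunE; case E: (u i == v i) => //=.
    by rewrite (Hz i (eqP E)) -(eqP E); case: (u i).
  by rewrite gf hf sd fu fv fz.
pose dec (E : {set 'I_n}) (p : BV n) := forall z : BV n, (forall j, j \in E -> z j = p j) -> f z.
have main : forall k (E : {set 'I_n}) (p : BV n), #|E| <= k -> dec E p -> exists i, dec [set i] p.
  elim=> [|k IH] E p.
    rewrite leqn0 cards_eq0 => /eqP -> D.
    by case/negP: Hf0; apply: D => j; rewrite in_set0.
  move=> Hk D.
  case: (set_0Vmem E) => [E0|[i iE]].
    by case/negP: Hf0; apply: D => j; rewrite E0 in_set0.
  pose z1 : BV n := [ffun j => if j \in E then p j else false].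
  pose z2 : BV n := [ffun j => if j \in E then p j else true].
  pose v : BV n := [ffun j => if j == i then p j else if j \in E then ~~ p j else true].
  have fz1 : f z1 by apply: D => j jE; rewrite ffunE jE.
  have fz2 : f z2 by apply: D => j jE; rewrite ffunE jE.
  case: (boolP (f v)) => fv.
    exists i => z Hz; apply: (clos z1 v z fz1 fv) => j.
    rewrite !ffunE; case: (eqVneq j i) => [->|ji].
      by rewrite iE => _; rewrite Hz ?in_set1.
    by case: (j \in E); case: (p j).
  have fnv : f (bneg v) by rewrite sd.
  have Dp : dec (E :\ i) p.
    move=> z Hz; apply: (clos z2 (bneg v) z fz2 fnv) => j.
    rewrite !ffunE; case: (eqVneq j i) => [->|ji]; first by rewrite iE; case: (p i).
    case jE: (j \in E) => //= _; by rewrite Hz // in_setD1 ji jE.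
  apply: (IH (E :\ i) p) => //.
  by rewrite -ltnS (leq_trans _ Hk) // (cardsD1 i E) iE.
have D0 : dec [set: 'I_n] uf1.
  move=> z Hz; suff -> : z = uf1 by [].
  by apply/ffunP => j; apply: Hz; rewrite in_setT.
have [i Di] := main #|[set: 'I_n]| [set: 'I_n] uf1 (leqnn _) D0.
exists i, (uf1 i) => u; rewrite hf gf; suff E0 : f u = (u i == uf1 i) by split.
case: (boolP (u i == uf1 i)) => [/eqP E|E]; first by apply: Di => j; rewrite in_set1 => /eqP ->.
apply/negbTE; rewrite -sd; apply: Di => j; rewrite in_set1 => /eqP ->.
by rewrite ffunE; move: E; case: (u i); case: (uf1 i).
Qed.

Definition i0 : 'I_3 := @Ordinal 3 0 isT.
Definition i1 : 'I_3 := @Ordinal 3 1 isT.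
Definition i2 : 'I_3 := @Ordinal 3 2 isT.

Lemma ord3P (P : 'I_3 -> Prop) : P i0 -> P i1 -> P i2 -> forall a, P a.
Proof.
move=> H0 H1 H2 [[|[|[|m]]] Hm]; last by [].
- by rewrite (_ : Ordinal Hm = i0) //; apply: val_inj.
- by rewrite (_ : Ordinal Hm = i1) //; apply: val_inj.
- by rewrite (_ : Ordinal Hm = i2) //; apply: val_inj.
Qed.

Lemma pref_anti (o : lorder) a b : a != b -> pref o b a = ~~ pref o a b.
Proof.
move=> ab; rewrite /pref -leqNgt ltn_neqAle.
case: eqP => //= E; have E2 : b = a by apply: (@perm_inj _ o); apply: val_inj.
by rewrite E2 eqxx in ab.
Qed.

Definition nc (t : bool * bool * bool) :=
  let: (x, y, z) := t in ~~ [&& x == y & y == z].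

Definition rk (t : bool * bool * bool) (j : 'I_3) : nat :=
  let: (x, y, z) := t in
  if j == i0 then (~~ x) + z else if j == i1 then x + (~~ y) else y + (~~ z).

Lemma rk_lt t j : rk t j < 3.
Proof. rewrite /rk; case: t => [[x y] z]; case: ifP => _; last case: ifP => _; by case: x; case: y; case: z. Qed.

Definition rkf t (j : 'I_3) : 'I_3 := if nc t then Ordinal (rk_lt t j) else j.

Lemma rkf_inj t : injective (rkf t).
Proof.
rewrite /rkf; case Hnc: (nc t); last by [].
move=> x y; move: x y; apply: ord3P; apply: ord3P; move=> /(congr1 val) /=; rewrite /rk /=;
by case: t Hnc => [[[] []] []].
Qed.

Definition dec t : lorder := perm (@rkf_inj t).

Lemma dec_spec t : nc t ->
  [/\ pref (dec t) i0 i1 = t.1.1, pref (dec t) i1 i2 = t.1.2 & pref (dec t) i2 i0 = t.2].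
Proof.
move=> Hnc; rewrite /pref !permE /rkf Hnc /= /rk /=.
by case: t Hnc => [[[] []] []].
Qed.

Lemma card_sum (T : finType) (P : pred T) : #|[set x | P x]| = \sum_x (P x : nat).
Proof. by rewrite -sum1_card big_mkcond; apply: eq_bigr => x _; rewrite inE; case: (P x). Qed.

Lemma pref_swap (o : lorder) a b : a != b -> pref (tperm a b * o)%g a b = ~~ pref o a b.
Proof. by move=> ab; rewrite -pref_anti // /pref !permM tpermL tpermR. Qed.

Lemma sameab_refl n a b (x : profile n) : sameab a b x x.
Proof. by apply/forallP. Qed.

Lemma sameab_symm n a b (x y : profile n) : sameab a b x y = sameab a b y x.
Proof. by apply/forallP/forallP => H i; rewrite eq_sym H. Qed.

Lemma sameab_trans n a b (x x' y : profile n) :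
  sameab a b x x' -> sameab a b x y = sameab a b x' y.
Proof.
move=> /forallP H; apply/forallP/forallP => H2 i.
  by rewrite -(eqP (H i)) H2.
by rewrite (eqP (H i)) H2.
Qed.

Lemma sameab_swap n (a b : 'I_3) (x y : profile n) : a != b -> sameab b a x y = sameab a b x y.
Proof.
move=> ab; apply/forallP/forallP => H i; move: (H i);
rewrite (pref_anti (x i) ab) (pref_anti (y i) ab);
by case: (pref (x i) a b); case: (pref (y i) a b).
Qed.

Definition cls n a b (x : profile n) := [set y | sameab a b x y].

Lemma cls_card n (a b : 'I_3) (x x' : profile n) : a != b -> #|cls a b x| = #|cls a b x'|.
Proof.
move=> ab.
pose phi (y : profile n) : profile n :=
  [ffun i => if pref (x i) a b == pref (x' i) a b then y i else (tperm a b * y i)%g].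
have phiK : cancel phi phi.
  move=> y; apply/ffunP => i; rewrite ffunE; case E: (_ == _); rewrite ffunE E //.
  by rewrite mulgA tperm2 mul1g.
rewrite /cls !card_sum (reindex_inj (can_inj phiK)).
apply: eq_bigr => y _; congr nat_of_bool.
apply/forallP/forallP => Hy i; move: (Hy i); rewrite ffunE;
  case: ifP => [/eqP E|E]; rewrite ?pref_swap //; rewrite ?E //;
  by move: E; case: (pref (x i) a b); case: (pref (x' i) a b); case: (pref (y i) a b).
Qed.

Lemma card_sumS (T : finType) (A : {set T}) : #|A| = \sum_x (x \in A : nat).
Proof. by rewrite -sum1_card big_mkcond. Qed.

Definition Acnt n (F : SCF n) a b (x : profile n) c := #|[set y | sameab a b x y && (F y == c)]|.

Lemma Acnt_inv n (F : SCF n) a b x x' c : sameab a b x x' -> Acnt F a b x c = Acnt F a b x' c.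
Proof.
by move=> H; rewrite /Acnt; apply: eq_card => y; rewrite !inE (sameab_trans y H).
Qed.

Lemma L1 n (F : SCF n) a b c (phi : profile n -> nat) (x0 : profile n) : a != b ->
  (forall x y, sameab a b x y -> phi x = phi y) ->
  \sum_x Acnt F a b x c * phi x = #|cls a b x0| * \sum_x (F x == c) * phi x.
Proof.
move=> ab Hphi.
rewrite /Acnt; under eq_bigr => x _ do rewrite card_sumS big_distrl /=.
rewrite exchange_big /= big_distrr /=; apply: eq_bigr => y _.
rewrite (cls_card x0 y ab) /cls card_sumS big_distrl.
apply: eq_bigr => x _; rewrite !inE sameab_symm.
case: (boolP (sameab a b y x)) => H; last by [].
by rewrite (Hphi x y) 1?sameab_symm //= mul1n.
Qed.

Lemma nat_CS (T : finType) (m : T -> nat) :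
  (\sum_x m x) ^ 2 <= #|T| * \sum_x (m x) ^ 2.
Proof.
rewrite -(leq_pmul2l (isT : 0 < 2)).
have -> : 2 * (\sum_x m x) ^ 2 = \sum_x \sum_y 2 * (m x * m y).
  rewrite -mulnn big_distrl big_distrr /=; apply: eq_bigr => x _.
  by rewrite big_distrr /= big_distrr /=; apply: eq_bigr => y _; rewrite mulnA.
have -> : 2 * (#|T| * \sum_x m x ^ 2) = \sum_x \sum_y (m x ^ 2 + m y ^ 2).
  apply/esym; under eq_bigr => x _ do rewrite big_split /=. rewrite big_split /= [X in X + _]exchange_big /= sum_nat_const addnn -mul2n cardT -cardE. by [].
apply: leq_sum => x _; apply: leq_sum => y _; exact: (nat_Cauchy _ _).1.
Qed.

Definition bad n (F : SCF n) a b (x : profile n) : bool :=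
  ((F x == b) && (Acnt F a b x b <= Acnt F a b x a)) ||
  ((F x == a) && (Acnt F a b x a < Acnt F a b x b)).

Lemma Pcnt_eq n (F : SCF n) a b :
  #|[set p : profile n * profile n | [&& sameab a b p.1 p.2, F p.1 == a & F p.2 == b]]|
  = \sum_x (F x == a) * Acnt F a b x b.
Proof.
rewrite card_sumS.
have -> : \sum_x (F x == a) * Acnt F a b x b =
   \sum_x \sum_y ((sameab a b x y) && (F x == a) && (F y == b) : nat).
  apply: eq_bigr => x _; rewrite /Acnt card_sumS big_distrr /=; apply: eq_bigr => y _.
  by rewrite inE; case: (sameab a b x y); case: (F x == a); case: (F y == b).
rewrite pair_big /=; apply: eq_bigr => [[x y]] _; rewrite inE /=.
by case: (sameab a b x y); case: (F x == a); case: (F y == b).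
Qed.

Lemma Dcnt_eq n a b (x0 : profile n) : a != b ->
  #|[set p : profile n * profile n | sameab a b p.1 p.2]| = #|profile n| * #|cls a b x0|.
Proof.
move=> ab; rewrite card_sumS.
have -> : #|profile n| * #|cls a b x0| = \sum_(x : profile n) \sum_(y : profile n) (sameab a b x y : nat).
  rewrite cardT -cardE -sum_nat_const; apply: eq_bigr => x _.
  by rewrite (cls_card x0 x ab) /cls card_sumS; apply: eq_bigr => y _; rewrite inE.
by rewrite pair_big /=; apply: eq_bigr => [[x y]] _; rewrite inE.
Qed.

Lemma bad_card n (F : SCF n) a b (x0 : profile n) : a != b ->
  #|cls a b x0| * #|[set x | bad F a b x]| =
  \sum_x minn (Acnt F a b x a) (Acnt F a b x b).
Proof.
move=> ab; rewrite (card_sumS [set x | bad F a b x]).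
pose phi1 x : nat := (Acnt F a b x b <= Acnt F a b x a).
pose phi2 x : nat := (Acnt F a b x a < Acnt F a b x b).
under eq_bigr => x _ do rewrite inE.
have -> : \sum_x (bad F a b x : nat) =
   \sum_x (F x == b) * phi1 x + \sum_x (F x == a) * phi2 x.
  rewrite -big_split; apply: eq_bigr => x _; rewrite /bad /phi1 /phi2.
  case: (eqVneq (F x) b) => Eb; case: (eqVneq (F x) a) => Ea //=.
  - by move: ab; rewrite -Ea Eb eqxx.
  - by rewrite ?orbF ?mul1n ?mul0n ?addn0 ?add0n.
  - by rewrite ?orbF ?mul1n ?mul0n ?addn0 ?add0n.
have i1 : forall x y, sameab a b x y -> phi1 x = phi1 y.
  by move=> x y H; rewrite /phi1 !(Acnt_inv F _ H).
have i2 : forall x y, sameab a b x y -> phi2 x = phi2 y.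
  by move=> x y H; rewrite /phi2 !(Acnt_inv F _ H).
rewrite mulnDr -(L1 F b x0 ab i1) -(L1 F a x0 ab i2) -big_split.
apply: eq_bigr => x _; rewrite /phi1 /phi2 /minn.
by case: ltnP => H /=; rewrite ?muln0 ?muln1 ?addn0 ?add0n.
Qed.

Import GRing.Theory Num.Theory.

Lemma bad_nat n (F : SCF n) a b : a != b ->
  #|cls a b ([ffun _ => 1%g] : profile n)| * #|[set x | bad F a b x]| ^ 2 <=
  #|profile n| * #|[set p : profile n * profile n | [&& sameab a b p.1 p.2, F p.1 == a & F p.2 == b]]|.
Proof.
move=> ab; set x0 : profile n := [ffun _ => 1%g].
have cpos : 0 < #|cls a b x0| by apply/card_gt0P; exists x0; rewrite inE sameab_refl.
rewrite -(leq_pmul2l cpos) mulnA mulnn -expnMn bad_card //.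
apply: (leq_trans (nat_CS _)); rewrite mulnCA leq_pmul2l; last by apply/card_gt0P; exists x0.
  rewrite Pcnt_eq -(@L1 n F a b a (fun x => Acnt F a b x b) x0 ab); last first.
    by move=> x y H; apply: Acnt_inv.
  apply: leq_sum => x _; rewrite -mulnn; apply: leq_mul; [exact: geq_minl | exact: geq_minr].
Qed.

Local Open Scope ring_scope.

Lemma le_sqrt_of_sq (R : rcfType) (x y : R) : 0 <= x -> x ^+ 2 <= y -> x <= Num.sqrt y.
Proof.
move=> x0 H; rewrite -(ger0_norm x0) -sqrtr_sqr; exact: ler_wsqrtr.
Qed.

Lemma bad_bound (R : rcfType) n (F : SCF n) a b : a != b ->
  prob R (bad F a b) <= Num.sqrt (Mab R F a b).
Proof.
move=> ab; set x0 : profile n := [ffun _ => 1%g].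
have Hn := bad_nat F ab.
rewrite /Mab (Dcnt_eq x0 ab) /prob.
move: Hn; set c := #|cls a b _|; set B := #|[set x | bad F a b x]|;
  set N := #|profile n|; set P := #|[set p | _ ]| => Hn.
have cpos : (0 < c)%N by apply/card_gt0P; exists x0; rewrite inE sameab_refl.
have Npos : (0 < N)%N by apply/card_gt0P; exists x0.
apply: le_sqrt_of_sq; first by rewrite divr_ge0 ?ler0n.
have cR : (c%:R : R) != 0 by rewrite pnatr_eq0 -lt0n.
have NR : (N%:R : R) != 0 by rewrite pnatr_eq0 -lt0n.
have -> : (B%:R / N%:R) ^+ 2 = (c * B ^ 2)%N%:R / (N ^ 2 * c)%N%:R :> R.
  rewrite !natrM; field; by rewrite cR NR.
have -> : P%:R / (N * c)%N%:R = (N * P)%N%:R / (N ^ 2 * c)%N%:R :> R.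
  rewrite !natrM; field; by rewrite cR NR.
by rewrite ler_wpM2r ?invr_ge0 ?ler0n // ler_nat.
Qed.

Local Close Scope ring_scope.

Lemma gbit_lt (w : gout) (a b : 'I_3) (h : (a < b)%N) :
  gbit w a b = w (Sub (a, b) h).
Proof. by rewrite /gbit insubT. Qed.

Lemma gbit_gt (w : gout) (a b : 'I_3) (h : (a < b)%N) :
  gbit w b a = ~~ w (Sub (a, b) h).
Proof.
rewrite /gbit insubF ?insubT //=.
by apply/negbTE; rewrite -leqNgt ltnW.
Qed.

Lemma gbit_anti (w : gout) (a b : 'I_3) : a != b -> gbit w b a = ~~ gbit w a b.
Proof.
move=> ab; case: (ltngtP a b) => h.
- by rewrite (gbit_gt w h) (gbit_lt w h).
- by rewrite (gbit_gt w h) (gbit_lt w h) negbK.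
- by move: ab; rewrite (val_inj h) eqxx.
Qed.

Definition Gdef n (F : SCF n) : GSWF n :=
  [ffun x => [ffun p : upair =>
     (Acnt F (val p).1 (val p).2 x (val p).2 <= Acnt F (val p).1 (val p).2 x (val p).1)%N]].

Lemma gbitG n (F : SCF n) x (a b : 'I_3) : (a < b)%N ->
  gbit (Gdef F x) a b = (Acnt F a b x b <= Acnt F a b x a)%N.
Proof. by move=> h; rewrite (gbit_lt _ h) !ffunE. Qed.

Lemma IIA_G n (F : SCF n) : IIA (Gdef F).
Proof.
apply/forallP => a; apply/forallP => b; apply/implyP => ab.
apply/forallP => x; apply/forallP => y; apply/implyP => Hxy.
case: (ltngtP a b) => h.
- by rewrite !gbitG // !(Acnt_inv F _ Hxy).
- have ba : b != a by rewrite eq_sym.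
  rewrite !(gbit_anti _ ba) !gbitG //.
  by rewrite -(sameab_swap _ _ ab) in Hxy; rewrite !(Acnt_inv F _ Hxy).
- by move: ab; rewrite (val_inj h) eqxx.
Qed.

Definition topb (w : gout) (c : 'I_3) : bool := [forall b, (b != c) ==> gbit w c b].

Lemma notgood_bad n (F : SCF n) x : ~~ topb (Gdef F x) (F x) ->
  exists a b : 'I_3, (a < b)%N /\ bad F a b x.
Proof.
move=> /forallPn [s]; rewrite negb_imply => /andP [st ng].
case: (ltngtP (F x) s) => h.
- exists (F x), s; split => //; rewrite /bad eqxx /=; apply/orP; right.
  by move: ng; rewrite gbitG // -ltnNge.
- exists s, (F x); split => //; rewrite /bad eqxx /=; apply/orP; left.
  by move: ng; rewrite (gbit_anti _ st) gbitG // negbK.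
- by move: st; rewrite (val_inj h) eqxx.
Qed.

Lemma gbit_pairs (w : gout) (o : lorder) (fl : bool) :
  gbit w i0 i1 = pref o i0 i1 (+) fl ->
  gbit w i1 i2 = pref o i1 i2 (+) fl ->
  gbit w i2 i0 = pref o i2 i0 (+) fl ->
  forall a b : 'I_3, a != b -> gbit w a b = pref o a b (+) fl.
Proof.
move=> E01 E12 E20.
have a01 : i0 != i1 by []. have a12 : i1 != i2 by []. have a20 : i2 != i0 by [].
apply: ord3P; apply: ord3P => // _;
  first [ by rewrite (gbit_anti _ a01) (pref_anti _ a01) E01 addNb
        | by rewrite (gbit_anti _ a20) (pref_anti _ a20) E20 addNb
        | by rewrite (gbit_anti _ a12) (pref_anti _ a12) E12 addNb ].
Qed.

Definition X01 n (x : profile n) : BV n := [ffun i => pref (x i) i0 i1].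
Definition X12 n (x : profile n) : BV n := [ffun i => pref (x i) i1 i2].
Definition X20 n (x : profile n) : BV n := [ffun i => pref (x i) i2 i0].
Definition prof n (u v w : BV n) : profile n := [ffun i => dec (u i, v i, w i)].

Lemma prof_spec n (u v w : BV n) : adm u v w ->
  [/\ X01 (prof u v w) = u, X12 (prof u v w) = v & X20 (prof u v w) = w].
Proof.
move=> Hadm.
have Hs : forall i, [/\ pref (prof u v w i) i0 i1 = u i, pref (prof u v w i) i1 i2 = v i
                      & pref (prof u v w i) i2 i0 = w i].
  by move=> i; rewrite ffunE; exact: (@dec_spec (u i, v i, w i) (Hadm i)).
by split; apply/ffunP => i; rewrite ffunE; case: (Hs i).
Qed.

Lemma sameab_eqX n (a b : 'I_3) (x y : profile n) :
  [ffun i => pref (x i) a b] = [ffun i => pref (y i) a b] -> sameab a b x y.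
Proof. by move/ffunP => E; apply/forallP => i; move: (E i); rewrite !ffunE => ->. Qed.

Lemma trans_no_cycle (w : gout) : transitive_out w ->
  ~ (gbit w i0 i1 = gbit w i1 i2 /\ gbit w i1 i2 = gbit w i2 i0).
Proof.
move=> /forallP T [E1 E2].
have a01 : i0 != i1 by []. have a12 : i1 != i2 by []. have a20 : i2 != i0 by [].
case H: (gbit w i0 i1).
- move: (T i0) => /forallP /(_ i1) /forallP /(_ i2) /implyP /(_ isT) /implyP.
  rewrite H -E1 H (gbit_anti _ a20) -E2 -E1 H => /(_ isT).  by [].
- move: (T i2) => /forallP /(_ i1) /forallP /(_ i0) /implyP /(_ isT) /implyP.
  rewrite (gbit_anti _ a12) (gbit_anti _ a01) -E1 H -E2 -E1 H => /(_ isT). by [].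
Qed.

Lemma classify n (H : GSWF n) : inTR H ->
  (exists c, forall x, ~~ topb (H x) c) \/
  (exists i, forall x (a b : 'I_3), a != b -> gbit (H x) a b = pref (x i) a b) \/
  (exists i, forall x (a b : 'I_3), a != b -> gbit (H x) a b = pref (x i) b a).
Proof.
move=> /andP [iia /forallP tr].
case: (boolP [exists c, [forall x, ~~ topb (H x) c]]) => [/existsP [c /forallP Hc]|Hn].
  by left; exists c.
right.
have Htop : forall c, exists x, topb (H x) c.
  move=> c; move: Hn; rewrite negb_exists => /forallP /(_ c) /forallPn [x].
  by rewrite negbK => ?; exists x.
have iiaE : forall (a b : 'I_3) x y, a != b -> sameab a b x y -> gbit (H x) a b = gbit (H y) a b.
  move=> a b x y ab Hxy.
  move: iia => /forallP /(_ a) /forallP /(_ b) /implyP /(_ ab) /forallP /(_ x) /forallP /(_ y).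
  by move/implyP/(_ Hxy)/eqP.
have a01 : i0 != i1 by []. have a12 : i1 != i2 by []. have a20 : i2 != i0 by [].
pose f (u : BV n) := gbit (H (prof u (bneg u) u)) i0 i1.
pose g (v : BV n) := gbit (H (prof (bneg v) v v)) i1 i2.
pose h (w : BV n) := gbit (H (prof (bneg w) (bneg w) w)) i2 i0.
have fX : forall x, gbit (H x) i0 i1 = f (X01 x).
  move=> x; apply: iiaE => //; apply: sameab_eqX.
  have Ha : adm (X01 x) (bneg (X01 x)) (X01 x) by move=> i; rewrite !ffunE; case: (pref (x i) _ _).
  have [E _ _] := prof_spec Ha; rewrite /X01 in E; by rewrite E.
have gX : forall x, gbit (H x) i1 i2 = g (X12 x).
  move=> x; apply: iiaE => //; apply: sameab_eqX.
  have Ha : adm (bneg (X12 x)) (X12 x) (X12 x) by move=> i; rewrite !ffunE; case: (pref (x i) _ _).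
  have [_ E _] := prof_spec Ha; rewrite /X12 in E; by rewrite E.
have hX : forall x, gbit (H x) i2 i0 = h (X20 x).
  move=> x; apply: iiaE => //; apply: sameab_eqX.
  have Ha : adm (bneg (X20 x)) (bneg (X20 x)) (X20 x) by move=> i; rewrite !ffunE; case: (pref (x i) _ _).
  have [_ _ E] := prof_spec Ha; rewrite /X20 in E; by rewrite E.
have topE : forall x (c b : 'I_3), topb (H x) c -> b != c -> gbit (H x) c b.
  by move=> x c b /forallP /(_ b) /implyP.
have [x0 T0] := Htop i0. have [x1 T1] := Htop i1. have [x2 T2] := Htop i2.
have [i [c Hw]] : exists i, exists c : bool, forall u,
    [/\ f u = (u i == c), g u = (u i == c) & h u = (u i == c)].
  apply: wilson_bool.
  - by exists (X01 x0); rewrite -fX topE.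
  - by exists (X01 x1); rewrite -fX -(negbK (gbit _ i0 i1)) -(gbit_anti _ a01) topE.
  - by exists (X12 x1); rewrite -gX topE.
  - by exists (X12 x2); rewrite -gX -(negbK (gbit _ i1 i2)) -(gbit_anti _ a12) topE.
  - by exists (X20 x2); rewrite -hX topE.
  - by exists (X20 x0); rewrite -hX -(negbK (gbit _ i2 i0)) -(gbit_anti _ a20) topE.
  move=> u v w Hadm; have [E1 E2 E3] := prof_spec Hadm.
  have K := trans_no_cycle (tr (prof u v w)); rewrite fX gX hX E1 E2 E3 in K.
  exact: K.
have Hb : forall x, forall a b : 'I_3, a != b -> gbit (H x) a b = pref (x i) a b (+) ~~ c.
  move=> x; apply: gbit_pairs.
  - by rewrite fX; case: (Hw (X01 x)) => -> _ _; rewrite ffunE; case: (pref _ _ _); case: (c).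
  - by rewrite gX; case: (Hw (X12 x)) => _ -> _; rewrite ffunE; case: (pref _ _ _); case: (c).
  - by rewrite hX; case: (Hw (X20 x)) => _ _ ->; rewrite ffunE; case: (pref _ _ _); case: (c).
move: Hb; case: (c) => /= Hb.
  by left; exists i => x a b ab; rewrite Hb // addbF.
right; exists i => x a b ab; rewrite Hb // addbT -pref_anti //.
Qed.

Import Order.TTheory GRing.Theory Num.Theory.

Lemma top_topalt (o : lorder) (t : 'I_3) : (forall b, b != t -> pref o t b) -> topalt o = t.
Proof.
move=> H; rewrite /topalt; case: (eqVneq ((o^-1)%g ord0) t) => // st.
by have := H _ st; rewrite /pref permKV.
Qed.

Lemma top_botalt (o : lorder) (t : 'I_3) : (forall b, b != t -> pref o b t) -> botalt o = t.
Proof.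
move=> H; rewrite /botalt; case: (eqVneq ((o^-1)%g ord_max) t) => // st.
have := H _ st; rewrite /pref permKV /=.
by case: (o t) => [[|[|[|m]]] Hm].
Qed.

Lemma three_cover (a b c t : 'I_3) : a != b -> b != c -> a != c -> [|| t == a, t == b | t == c].
Proof. by move: a b c t; do 4 apply: ord3P. Qed.

Lemma top_trans (w : gout) (t : 'I_3) : topb w t -> transitive_out w.
Proof.
move=> /forallP T.
have topE : forall b, b != t -> gbit w t b by move=> b; move/implyP: (T b).
apply/forallP => a; apply/forallP => b; apply/forallP => c.
apply/implyP => /and3P [ab bc ac]; apply/implyP => /andP [hab hbc].
case/or3P: (three_cover t ab bc ac) => /eqP E; subst t.
- by apply: topE; rewrite eq_sym.
- have ba : b != a by rewrite eq_sym.
  by move: hab; rewrite (gbit_anti _ ba) topE.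
- have cb : c != b by rewrite eq_sym.
  by move: hbc; rewrite (gbit_anti _ cb) topE.
Qed.

Local Open Scope ring_scope.

Lemma prob_union2 (R : numFieldType) (T : finType) (P Q1 Q2 : pred T) :
  (forall x, P x -> Q1 x || Q2 x) -> prob R P <= prob R Q1 + prob R Q2.
Proof.
move=> H; rewrite /prob -mulrDl -natrD ler_wpM2r ?invr_ge0 ?ler0n // ler_nat.
rewrite !card_sumS -big_split /=; apply: leq_sum => x _; rewrite !inE.
by move: (H x); case: (P x); case: (Q1 x); case: (Q2 x) => // /(_ isT).
Qed.

Lemma prob_mono (R : numFieldType) (T : finType) (P Q : pred T) :
  (forall x, P x -> Q x) -> prob R P <= prob R Q.
Proof.
move=> H; rewrite /prob ler_wpM2r ?invr_ge0 ?ler0n // ler_nat.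
by apply: subset_leq_card; apply/subsetP => x; rewrite !inE; exact: H.
Qed.

Lemma prob_le1 (R : numFieldType) (T : finType) (P : pred T) : prob R P <= 1.
Proof.
rewrite /prob; case: (posnP #|T|) => [->|Np]; first by rewrite invr0 mulr0 ler01.
by rewrite ler_pdivrMr ?ltr0n // mul1r ler_nat max_card.
Qed.

Unset Implicit Arguments.
Import Order.TTheory GRing.Theory Num.Theory.
Local Open Scope ring_scope.
Import Order.TTheory GRing.Theory Num.Theory.
Local Open Scope ring_scope.

Theorem lemma4p3 (R : rcfType) (n : nat) (eps1 eps2 : R) (F : SCF n) :
  0 < eps1 -> 0 < eps2 ->
  (forall a b : 'I_3, a != b -> Mab R F a b <= eps1) ->
  (forall i : 'I_n, far_from_dict F i eps2 /\ far_from_antidict F i eps2) ->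
  (forall a : 'I_3, eps2 <= prob R (fun x : profile n => F x == a)) ->
  exists G : GSWF n,
    [/\ IIA G,
        eps2 - 3%:R * Num.sqrt eps1 <= DistTR R G
      & NT R G <= 3%:R * Num.sqrt eps1].
Proof.
move=> e1 e2 HM Hfar Hpr.
set s := Num.sqrt eps1.
have s0 : 0 <= s by apply: sqrtr_ge0.
have HB : forall a b : 'I_3, a != b -> prob R (bad F a b) <= s.
  move=> a b ab; apply: le_trans (bad_bound R F ab) _; exact: ler_wsqrtr (HM a b ab).
have Hng : prob R (fun x => ~~ topb (Gdef F x) (F x)) <= 3%:R * s.
  have H3 : prob R (fun x => ~~ topb (Gdef F x) (F x)) <=
     prob R (bad F i0 i1) + prob R (bad F i0 i2) + prob R (bad F i1 i2).
    have U2 := @prob_union2 R _ (fun x => bad F i0 i1 x || bad F i0 i2 x) (bad F i0 i1) (bad F i0 i2) (fun x h => h).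
    have U1 : prob R (fun x => ~~ topb (Gdef F x) (F x)) <=
        prob R (fun x => bad F i0 i1 x || bad F i0 i2 x) + prob R (bad F i1 i2).
      apply: prob_union2 => x /notgood_bad [a [b [ab Hb]]]; move: a b ab Hb.
      do 2 apply: ord3P; move=> //= h Hb; first [by rewrite Hb ?orbT | by []].
    lra.
  apply: (le_trans H3).
  have := HB i0 i1 isT; have := HB i0 i2 isT; have := HB i1 i2 isT.
  rewrite (_ : 3%:R = 1 + 1 + 1) //; lra.
exists (Gdef F); split.
- exact: IIA_G.
- rewrite /DistTR; apply: le_bigmin.
    have := Hpr i0; have := prob_le1 R (fun x : profile n => F x == i0). lra.
  move=> H /classify [[c Hc]|[[i Hi]|[i Hi]]].
  + have Hu : prob R (fun x : profile n => F x == c) <=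
       gdist R (Gdef F) H + prob R (fun x => ~~ topb (Gdef F x) (F x)).
      apply: prob_union2 => x /eqP Fc.
      case: (eqVneq (Gdef F x) (H x)) => [E|//] /=.
      by rewrite E Fc; apply: Hc.
    have := Hpr c; lra.
  + have Hu : prob R (fun x : profile n => F x != topalt (x i)) <=
       gdist R (Gdef F) H + prob R (fun x => ~~ topb (Gdef F x) (F x)).
      apply: prob_union2 => x Fx.
      case: (eqVneq (Gdef F x) (H x)) => [E|//] /=.
      apply: contra Fx; rewrite E => /forallP T; apply/eqP/esym/top_topalt => b bt.
      rewrite -Hi; last by rewrite eq_sym.
      by move/implyP: (T b); apply.
    have := (Hfar i).1; rewrite /far_from_dict; lra.
  + have Hu : prob R (fun x : profile n => F x != botalt (x i)) <=
       gdist R (Gdef F) H + prob R (fun x => ~~ topb (Gdef F x) (F x)).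
      apply: prob_union2 => x Fx.
      case: (eqVneq (Gdef F x) (H x)) => [E|//] /=.
      apply: contra Fx; rewrite E => /forallP T; apply/eqP/esym/top_botalt => b bt.
      rewrite -Hi; last by rewrite eq_sym.
      by move/implyP: (T b); apply.
    have := (Hfar i).2; rewrite /far_from_antidict; lra.
- apply: le_trans Hng; apply: prob_mono => x; apply: contra; exact: top_trans.
Qed.
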